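(* Let $Q=\{[\bar x]\in\mathbb P^3(\mathbb K):\bar x\cdot\bar x=0\}$. Let $a,b,c\in\mathbb P^3(\mathbb K)\setminus Q$, suppose $a\notin\{b\}\cup b^\perp$, and suppose $\gamma_c\gamma_a$ commutes with $\gamma_b\gamma_c$. Then $c\in\ell\cup\ell^\perp$, where $\ell$ is the line spanned by $a$ and $b$.
   Context: $\mathbb K$ is an algebraically closed field of characteristic 0 (an ultrapower of $\mathbb C$), and $\cdot$ is the standard bilinear form $\bar x\cdot\bar y=\sum_{i<4}x_iy_i$ on $\mathbb K^4$. For a projective subspace $P\subseteq\mathbb P^3$ with lift $\tilde P\le\mathbb K^4$, $P^\perp$ is the projective subspace whose lift is $\tilde P^\perp=\{w:w\cdot v=0\ \forall v\in\tilde P\}$. For $x\in\mathbb P^3\setminus Q$, $\gamma_x:Q\to Q$ is the involution defined by collinearity with $x$: for $y\in Q$ the line through $x,y$ meets $Q$ in the divisor $y+\gamma_x(y)$; equivalently $\gamma_x$ is the restriction to $Q$ of the projectivisation of the linear map which is $-1$ on $\tilde x$ and the identity on $\tilde x^\perp$. Composition is written by juxtaposition. *)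

(* Defs.v *)
From HB Require Import structures.
From mathcomp Require Import all_boot all_order all_algebra.
Set Implicit Arguments. Unset Strict Implicit. Unset Printing Implicit Defensive.
Import GRing.Theory.
Local Open Scope ring_scope.

(* Vectors of K^4 (lifts of points of P^3(K)) are row vectors 'rV[K]_4.
   A point of P^3 is represented by a nonzero vector; two nonzero vectors
   represent the same point iff they are proportional. *)

Definition dot4 (K : fieldType) (x y : 'rV[K]_4) : K :=
  \sum_(i < 4) x 0 i * y 0 i.

Definition projeq (K : fieldType) (u v : 'rV[K]_4) : Prop :=
  exists k : K, k != 0 /\ u = k *: v.

Definition onQ (K : fieldType) (y : 'rV[K]_4) : Prop :=
  y != 0 /\ dot4 y y = 0.

(* the linear map which is -1 on <x> and the identity on x^perp
   (well defined for x . x <> 0); gamma_x is its projectivisation on Q *)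
Definition gammaLin (K : fieldType) (x : 'rV[K]_4) (v : 'rV[K]_4) : 'rV[K]_4 :=
  v - ((2%:R * dot4 v x) / dot4 x x) *: x.

Definition eqOnQ (K : fieldType) (f g : 'rV[K]_4 -> 'rV[K]_4) : Prop :=
  forall y, onQ y -> projeq (f y) (g y).

Definition in_span2 (K : fieldType) (a b c : 'rV[K]_4) : Prop :=
  exists s t : K, c = s *: a + t *: b.

Definition in_perp2 (K : fieldType) (a b c : 'rV[K]_4) : Prop :=
  dot4 c a = 0 /\ dot4 c b = 0.

(* Main.v *)
Require Import Defs.
From HB Require Import structures.
From mathcomp Require Import all_boot all_order all_algebra.
From mathcomp Require Import ring.
From Stdlib Require Import Classical_Prop.
Set Implicit Arguments. Unset Strict Implicit. Unset Printing Implicit Defensive.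
Import GRing.Theory.
Local Open Scope ring_scope.

Section S.
Variable K : closedFieldType.

Definition mk4 (x0 x1 x2 x3 : K) : 'rV[K]_4 := \row_(j < 4) nth 0 [:: x0; x1; x2; x3] j.

Lemma dot_mk4 x0 x1 x2 x3 y0 y1 y2 y3 :
  dot4 (mk4 x0 x1 x2 x3) (mk4 y0 y1 y2 y3) = x0 * y0 + x1 * y1 + x2 * y2 + x3 * y3.
Proof. by rewrite /dot4 !big_ord_recl big_ord0 !mxE /= addr0 !addrA. Qed.

Lemma mk4_add x0 x1 x2 x3 y0 y1 y2 y3 :
  mk4 x0 x1 x2 x3 + mk4 y0 y1 y2 y3 = mk4 (x0 + y0) (x1 + y1) (x2 + y2) (x3 + y3).
Proof. by apply/rowP => j; rewrite !mxE; case: j => [[|[|[|[|j]]]] Hj]. Qed.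

Lemma mk4_neq0 x0 x1 x2 x3 : (x0 != 0) || (x2 != 0) -> mk4 x0 x1 x2 x3 != 0.
Proof.
case/orP => h; apply/eqP => E.
- by have := congr1 (fun w : 'rV_4 => w 0 ord0) E; rewrite !mxE /=; apply/eqP.
- have := congr1 (fun w : 'rV_4 => w 0 (lift ord0 (lift ord0 ord0))) E.
  by rewrite !mxE /=; apply/eqP.
Qed.

Lemma scalar_of_null (H : 'rV[K]_4 -> 'rV[K]_4) :
  (2 : K) != 0 ->
  (forall u v, H (u + v) = H u + H v) -> (forall k u, H (k *: u) = k *: H u) ->
  (forall y, onQ y -> exists k, H y = k *: y) -> exists l, forall u, H u = l *: u.
Proof.
move=> h2 HD HZ HQ.
have [i hi] := imaginary_exists K.
have nul : forall s t, s * s + t * t = 0 -> s != 0 -> 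
   (onQ (mk4 s t 0 0) /\ onQ (mk4 0 0 s t)).
  move=> s t st s0; split; split.
  - by rewrite mk4_neq0 // s0.
  - by rewrite dot_mk4 mulr0 !addr0.
  - by rewrite mk4_neq0 // s0 orbT.
  - by rewrite dot_mk4 mulr0 !add0r.
have i1 : 1 * 1 + i * i = 0 :> K by rewrite mul1r -expr2 hi subrr.
have i2 : 1 * 1 + (- i) * (- i) = 0 :> K by rewrite mul1r mulrNN -expr2 hi subrr.
have [[q1 q3] [q2 q4]] := (nul _ _ i1 (oner_neq0 K), nul _ _ i2 (oner_neq0 K)).
have [l1 e1] := HQ _ q1.
have [l2 e2] := HQ _ q2.
have [l3 e3] := HQ _ q3.
have [l4 e4] := HQ _ q4.
have agree : forall s t s' t' (la lb : K), s != 0 -> s' != 0 ->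
   H (mk4 s t 0 0) = la *: mk4 s t 0 0 -> H (mk4 0 0 s' t') = lb *: mk4 0 0 s' t' ->
   s * s + t * t = 0 -> s' * s' + t' * t' = 0 -> la = lb.
  move=> s t s' t' la lb s0 s'0 ea eb n1 n2.
  have q : onQ (mk4 s t 0 0 + mk4 0 0 s' t').
    rewrite mk4_add !addr0 !add0r; split; first by rewrite mk4_neq0 // s0.
    by rewrite dot_mk4 n1 -addrA n2 addr0.
  have [g eg] := HQ _ q.
  rewrite HD ea eb scalerDr in eg.
  have c0 := congr1 (fun w : 'rV_4 => w 0 ord0) eg.
  have c2 := congr1 (fun w : 'rV_4 => w 0 (lift ord0 (lift ord0 ord0))) eg.
  move: c0 c2; rewrite !mxE /= !mulr0 !addr0 !add0r => c0 c2.
  have -> : la = g by apply: (mulIf s0).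
  by apply: (mulIf s'0).
have a13 := agree _ _ _ _ _ _ (oner_neq0 K) (oner_neq0 K) e1 e3 i1 i1.
have a14 := agree _ _ _ _ _ _ (oner_neq0 K) (oner_neq0 K) e1 e4 i1 i2.
have a23 := agree _ _ _ _ _ _ (oner_neq0 K) (oner_neq0 K) e2 e3 i2 i1.
exists l1 => u.
pose s1 := (u 0 ord0 - i * u 0 (lift ord0 ord0)) / 2.
pose s2 := (u 0 ord0 + i * u 0 (lift ord0 ord0)) / 2.
pose s3 := (u 0 (lift ord0 (lift ord0 ord0)) - i * u 0 (lift ord0 (lift ord0 (lift ord0 ord0)))) / 2.
pose s4 := (u 0 (lift ord0 (lift ord0 ord0)) + i * u 0 (lift ord0 (lift ord0 (lift ord0 ord0)))) / 2.
have decomp : u = s1 *: mk4 1 i 0 0 + s2 *: mk4 1 (-i) 0 0 + s3 *: mk4 0 0 1 i + s4 *: mk4 0 0 1 (-i).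
  apply/rowP => j; rewrite !mxE.
  have ii : i * i = -1 by rewrite -expr2 hi.
  case: j => [[|[|[|[|j]]]] Hj] //=; rewrite /s1 /s2 /s3 /s4.
  - rewrite (_ : Ordinal Hj = ord0); last by apply: val_inj.
    by field.
  - rewrite (_ : Ordinal Hj = lift ord0 ord0); last by apply: val_inj.
    apply/eqP; rewrite -subr_eq0; apply/eqP.
    transitivity (u 0 (lift ord0 ord0) * (1 + i * i)); first by field.
    by rewrite ii subrr mulr0.
  - rewrite (_ : Ordinal Hj = lift ord0 (lift ord0 ord0)); last by apply: val_inj.
    by field.
  - rewrite (_ : Ordinal Hj = lift ord0 (lift ord0 (lift ord0 ord0))); last by apply: val_inj.
    apply/eqP; rewrite -subr_eq0; apply/eqP.
    transitivity (u 0 (lift ord0 (lift ord0 (lift ord0 ord0))) * (1 + i * i)); first by field.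
    by rewrite ii subrr mulr0.
rewrite decomp !HD !HZ e1 e2 e3 e4 -a13 -a14 a23 -a13.
by rewrite !scalerA ![_ * l1]mulrC -!scalerA -!scalerDr.
Qed.
End S.
Section L.
Variable K : fieldType.
Implicit Types a b c u v w x : 'rV[K]_4.

Lemma dotDl u v w : dot4 (u + v) w = dot4 u w + dot4 v w.
Proof. by rewrite /dot4 -big_split; apply: eq_bigr => j _; rewrite mxE mulrDl. Qed.
Lemma dotZl k u w : dot4 (k *: u) w = k * dot4 u w.
Proof. by rewrite /dot4 mulr_sumr; apply: eq_bigr => j _; rewrite mxE mulrA. Qed.
Lemma dotC u v : dot4 u v = dot4 v u.
Proof. by rewrite /dot4; apply: eq_bigr => j _; rewrite mulrC. Qed.

Lemma gLD x u v : gammaLin x (u + v) = gammaLin x u + gammaLin x v.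
Proof. by rewrite /gammaLin dotDl mulrDr mulrDl scalerDl opprD addrACA. Qed.
Lemma gLZ x k u : gammaLin x (k *: u) = k *: gammaLin x u.
Proof.
rewrite /gammaLin dotZl scalerBr scalerA; congr (_ - _ *: _).
by rewrite mulrCA [RHS]mulrA.
Qed.
Lemma gLN x u : gammaLin x (- u) = - gammaLin x u.
Proof. by rewrite -scaleN1r gLZ scaleN1r. Qed.
Lemma gLB x u v : gammaLin x (u - v) = gammaLin x u - gammaLin x v.
Proof. by rewrite gLD gLN. Qed.
Lemma gL_perp x v : dot4 v x = 0 -> gammaLin x v = v.
Proof. by move=> h; rewrite /gammaLin h mulr0 mul0r scale0r subr0. Qed.
Lemma gLxx x : dot4 x x != 0 -> gammaLin x x = - x.
Proof.
move=> h; rewrite /gammaLin -mulrA divff // mulr1.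
by rewrite scalerDl scale1r opprD addrA subrr sub0r.
Qed.
Lemma gLK x v : dot4 x x != 0 -> gammaLin x (gammaLin x v) = v.
Proof.
move=> h; rewrite {2}/gammaLin gLB gLZ gLxx // scalerN opprK.
by rewrite /gammaLin subrK.
Qed.
End L.
Section M.
Variable K : fieldType.
Implicit Types a b c v : 'rV[K]_4.

Definition vec3 a b c (i : 'I_3) : 'rV[K]_4 :=
  if val i == 0%N then a else if val i == 1%N then b else c.

Lemma exists_perp a b c : exists v, v != 0 /\ dot4 v a = 0 /\ dot4 v b = 0 /\ dot4 v c = 0.
Proof.
pose M : 'M[K]_(4,3) := \matrix_(j < 4, i < 3) vec3 a b c i 0 j.
have nf : ~~ row_free M.
  rewrite /row_free; apply/negP => /eqP H.
  by have := rank_leq_col M; rewrite H.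
rewrite -kermx_eq0 in nf.
have [r Hr] : exists r, row r (kermx M) != 0.
  case: (pickP (fun r => row r (kermx M) != 0)) => [r Hr|H]; first by exists r.
  case/negP: nf; apply/eqP/row_matrixP => r; rewrite row0.
  by apply/eqP; move: (H r) => /= /negbFE.
exists (row r (kermx M)); split => //.
have E : row r (kermx M) *m M = 0 by rewrite -row_mul mulmx_ker row0.
have D : forall i, dot4 (row r (kermx M)) (vec3 a b c i) = 0.
  move=> i; have := congr1 (fun w : 'rV_3 => w 0 i) E; rewrite !mxE => <-.
  by rewrite /dot4; apply: eq_bigr => j _; rewrite !mxE.
split; first exact: (D ord0).
split; first exact: (D (lift ord0 ord0)).
exact: (D (lift ord0 (lift ord0 ord0))).
Qed.

Lemma exists_dual a b c :
  (forall r s t : K, r *: a + s *: b + t *: c = 0 -> [/\ r = 0, s = 0 & t = 0]) ->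
  exists v, dot4 v a = 0 /\ dot4 v b = 0 /\ dot4 v c = 1.
Proof.
move=> ind.
pose A : 'M[K]_(3,4) := \matrix_(i < 3, j < 4) vec3 a b c i 0 j.
have rf : row_free A.
  have inj : forall u : 'rV_3, u *m A = 0 -> u = 0.
    move=> u E.
    have E2 : u 0 ord0 *: a + u 0 (lift ord0 ord0) *: b + u 0 (lift ord0 (lift ord0 ord0)) *: c = 0.
      apply/rowP => j; have := congr1 (fun w : 'rV_4 => w 0 j) E; rewrite !mxE => <-.
      rewrite !big_ord_recl big_ord0 !mxE /vec3 /=.
      by rewrite addr0 addrA.
    have [h0 h1 h2] := ind _ _ _ E2.
    apply/rowP => i; rewrite mxE.
    case: i => [[|[|[|i]]] Hi] //.
    - by rewrite -h0; congr (u 0 _); apply: val_inj.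
    - by rewrite -h1; congr (u 0 _); apply: val_inj.
    - by rewrite -h2; congr (u 0 _); apply: val_inj.
  rewrite -kermx_eq0; apply/eqP/row_matrixP => k; rewrite row0.
  by apply: inj; rewrite -row_mul mulmx_ker row0.
have [B HB] := row_freeP rf.
have D : forall i, dot4 (col (lift ord0 (lift ord0 ord0)) B)^T (vec3 a b c i) = (A *m B) i (lift ord0 (lift ord0 ord0)).
  move=> i; rewrite /dot4 !mxE; apply: eq_bigr => j _; rewrite !mxE mulrC.
  done.
exists (col (lift ord0 (lift ord0 ord0)) B)^T.
split; first by rewrite (D ord0) HB mxE.
split; first by rewrite (D (lift ord0 ord0)) HB mxE.
by rewrite (D (lift ord0 (lift ord0 ord0))) HB mxE.
Qed.
End M.

Lemma indep2 (K : fieldType) (a b : 'rV[K]_4) : a != 0 -> b != 0 -> ~ projeq a b ->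
  forall s t : K, s *: a + t *: b = 0 -> s = 0 /\ t = 0.
Proof.
move=> a0 b0 np s t E.
have [t0|t0] := eqVneq t 0.
  move: E; rewrite t0 scale0r addr0 => /eqP; rewrite scaler_eq0 (negbTE a0) orbF.
  by move/eqP.
exfalso; apply: np.
have eb : b = (- s / t) *: a.
  apply: (scalerI t0); rewrite scalerA mulrCA divff // mulr1 scaleNr.
  by apply/eqP; rewrite -addr_eq0 addrC E.
have s0 : s != 0.
  by apply: contra b0 => /eqP s0; rewrite eb s0 oppr0 mul0r scale0r.
exists (- t / s); split.
  by rewrite mulf_neq0 ?invr_eq0 ?oppr_eq0.
rewrite eb scalerA.
have -> : (- t / s) * (- s / t) = 1 by field; rewrite t0 s0.
by rewrite scale1r.
Qed.

Definition addf (K : fieldType) (f : 'rV[K]_4 -> 'rV[K]_4) := forall u v, f (u + v) = f u + f v.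
Definition scalf (K : fieldType) (f : 'rV[K]_4 -> 'rV[K]_4) := forall k u, f (k *: u) = k *: f u.
Lemma add_comp (K : fieldType) (f g : 'rV[K]_4 -> 'rV[K]_4) : addf f -> addf g -> addf (f \o g).
Proof. by move=> hf hg u v /=; rewrite hg hf. Qed.
Lemma scal_comp (K : fieldType) (f g : 'rV[K]_4 -> 'rV[K]_4) : scalf f -> scalf g -> scalf (f \o g).
Proof. by move=> hf hg k u /=; rewrite hg hf. Qed.

Unset Implicit Arguments.

Theorem lemma4p9 (K : closedFieldType) (charK0 : [pchar K] =i pred0)
  (a b c : 'rV[K]_4) :
  a != 0 -> b != 0 -> c != 0 ->
  dot4 a a != 0 -> dot4 b b != 0 -> dot4 c c != 0 ->
  ~ projeq a b -> dot4 a b != 0 ->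
  eqOnQ ((gammaLin c \o gammaLin a) \o (gammaLin b \o gammaLin c))
        ((gammaLin b \o gammaLin c) \o (gammaLin c \o gammaLin a)) ->
  in_span2 a b c \/ in_perp2 a b c.
Proof.
move=> a0 b0 c0 aa bb cc nab ab hQ.
have h2 : (2 : K) != 0 by rewrite ((pcharf0P K).1 charK0 2).
pose H := gammaLin a \o (gammaLin b \o (gammaLin c \o (gammaLin a \o (gammaLin b \o gammaLin c)))).
have HD : addf H.
  exact: (add_comp (gLD a) (add_comp (gLD b) (add_comp (gLD c) (add_comp (gLD a) (add_comp (gLD b) (gLD c)))))).
have HZ : scalf H.
  exact: (scal_comp (gLZ a) (scal_comp (gLZ b) (scal_comp (gLZ c) (scal_comp (gLZ a) (scal_comp (gLZ b) (gLZ c)))))).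
have HQ : forall y, onQ y -> exists k, H y = k *: y.
  move=> y /hQ [k [_ Ek]]; exists k.
  move: Ek => /= Ek; by rewrite /H /= Ek (gLK _ cc) gLZ (gLK _ bb) gLZ (gLK _ aa).
have [l Hl] := scalar_of_null h2 HD HZ HQ.
have [v0 [v00 [v0a [v0b v0c]]]] := exists_perp a b c.
have l1 : l = 1.
  have := Hl v0; rewrite /H /= (gL_perp v0c) (gL_perp v0b) (gL_perp v0a) (gL_perp v0c) (gL_perp v0b) (gL_perp v0a) => /eqP.
  rewrite -subr_eq0 -{1}(scale1r v0) -scalerBl scaler_eq0 (negbTE v00) orbF subr_eq0.
  by move/eqP.
case: (classic (in_span2 a b c)) => [|nsp]; first by left.
right.
have ind2 := indep2 a0 b0 nab.
have ind3 : forall r s t : K, r *: a + s *: b + t *: c = 0 -> [/\ r = 0, s = 0 & t = 0].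
  move=> r s t E.
  have [t0|t0] := eqVneq t 0.
    move: E; rewrite t0 scale0r addr0 => /ind2 [-> ->]; done.
  exfalso; apply: nsp; exists (- r / t), (- s / t).
  apply: (scalerI t0); rewrite scalerDr !scalerA !(mulrCA t) !divff // !mulr1.
  by rewrite !scaleNr; apply/eqP; rewrite -opprD -addr_eq0 addrC E.
have [v [va [vb vc]]] := exists_dual ind3.
have Hv : H v = v by rewrite Hl l1 scale1r.
have E1 : gammaLin a (gammaLin b (gammaLin c v)) = gammaLin c v.
  have := congr1 (fun w => gammaLin c (gammaLin b (gammaLin a w))) Hv.
  by rewrite /H /= (gLK _ aa) (gLK _ bb) (gLK _ cc) (gL_perp va) (gL_perp vb).
have E2 : gammaLin a (gammaLin b c) = c.
  have Ecv : gammaLin c v = v - (2 * 1 / dot4 c c) *: c by rewrite /gammaLin vc.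
  have k0 : 2 * 1 / dot4 c c != 0 by rewrite mulr1 mulf_neq0 ?invr_eq0.
  move: E1; rewrite Ecv (gLB b) (gLZ b) (gL_perp vb) (gLB a) (gLZ a) (gL_perp va).
  by move/addrI/oppr_inj/(scalerI k0).
have E3 : gammaLin b c = gammaLin a c by rewrite -{2}E2 (gLK _ aa).
move: E3; rewrite /gammaLin => /addrI/oppr_inj E4.
have E5 : (2 * dot4 c a / dot4 a a) *: a + (- (2 * dot4 c b / dot4 b b)) *: b = 0.
  by rewrite scaleNr -E4 subrr.
have [p1 p2] := ind2 _ _ E5.
split.
  by move/eqP: p1; rewrite !mulf_eq0 invr_eq0 (negbTE h2) (negbTE aa) orbF /= => /eqP.
by move/eqP: p2; rewrite oppr_eq0 !mulf_eq0 invr_eq0 (negbTE h2) (negbTE bb) orbF /= => /eqP.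
Qed.
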